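(* Let $M$ be a system execution satisfying the Lazy Set axioms A0, A1, A2, and let $\Rightarrow$ be the relation defined in the context. For all events $X,Y$, if $X\Rightarrow Y$ then it is not the case that $Y<X$ (equivalently, $\mathrm{Begin}(X)<\mathrm{End}(Y)$).
   Context: A system execution $M$ consists of: a set of events, partitioned into low-level events (actions) and high-level events; unary predicates $\mathrm{Add},\mathrm{Rem},\mathrm{Cnt}$ on events; a partial order $<$ on events in which every event has finitely many predecessors (and Lamport's finiteness property: for every event $x$ there is a finite set $E$ with $x<y$ for all events $y\notin E$); functions $\mathrm{Begin},\mathrm{End}$ from events to actions with $\mathrm{Begin}(e)=\mathrm{End}(e)=e$ for actions $e$; functions $\chi$ (events $\to\{0,1,f\}$), $\mathrm{val}$ (events $\to\mathbb N$), $\gamma$ (events $\to$ events). For events $X,Y$, $X<Y$ iff $\mathrm{End}(X)<\mathrm{Begin}(Y)$. Notation: $\mathrm{Add}^p(a)$ abbreviates $\mathrm{Add}(a)\wedge\chi(a)=p$, similarly $\mathrm{Rem}^p,\mathrm{Cnt}^p$; $\mathrm{Op}^p(a)$ abbreviates $(\mathrm{Add}(a)\vee\mathrm{Rem}(a)\vee\mathrm{Cnt}(a))\wedge\chi(a)=p$ for $p\in\{0,1\}$. A0: $\mathrm{Add},\mathrm{Rem},\mathrm{Cnt}$ pairwise disjoint; $\mathrm{Add},\mathrm{Rem}$ events are actions, $\mathrm{Cnt}$ events are high-level; $\mathrm{Begin}(X),\mathrm{End}(X)$ are actions; for $\mathrm{Cnt}$ events $E$, $\mathrm{Begin}(E)<\mathrm{End}(E)$;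 $<$ restricted to actions is linear. A1: for every $A$ with $\mathrm{Op}^1(A)$: $\mathrm{Add}^0(\gamma(A))$, $\mathrm{val}(\gamma(A))=\mathrm{val}(A)$, $\gamma(A)<\mathrm{End}(A)$, and no $R$ has $\mathrm{Rem}^1(R)$, $\gamma(R)=\gamma(A)$, $\gamma(A)<R<A$. A2: if $\mathrm{Op}^0(B)$, $\mathrm{Add}^0(A)$, $A<B$, $\mathrm{val}(A)=\mathrm{val}(B)$, then some $R$ has $\mathrm{Rem}^1(R)$, $A=\gamma(R)$, $R<\mathrm{End}(B)$. The relation $\Rightarrow$ on events holds exactly in the following cases: (1) for every $\mathrm{Cnt}^1$ event $C$: $\gamma(C)\Rightarrow C$, and $C\Rightarrow R$ for every $R$ with $\mathrm{Rem}^1(R)$ and $\gamma(R)=\gamma(C)$; (2) $R\Rightarrow C$ whenever $\mathrm{Cnt}^0(C)$, $\mathrm{Rem}^1(R)$, $\mathrm{val}(R)=\mathrm{val}(C)$, not $C<R$, and $\gamma(R)<C$; (3) $C\Rightarrow A$ whenever $\mathrm{Cnt}^0(C)$, $\mathrm{Add}^0(A)$, $\mathrm{val}(C)=\mathrm{val}(A)$ and not $A<C$. *)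

(* Defs.v *)
From Stdlib Require Import List.
Import ListNotations.

Inductive chival : Type := c0 | c1 | cf.

Record SysExec : Type := {
  Ev : Type;
  action : Ev -> Prop;       (* low-level events; the others are high-level *)
  Add : Ev -> Prop;
  Rem : Ev -> Prop;
  Cnt : Ev -> Prop;
  lt : Ev -> Ev -> Prop;
  Begin : Ev -> Ev;
  End : Ev -> Ev;
  chi : Ev -> chival;
  val : Ev -> nat;
  gamma : Ev -> Ev
}.

Section LazySet.
Variable M : SysExec.
Local Notation E := (Ev M).
Local Notation "x <<< y" := (lt M x y) (at level 70).

Definition is_system_execution : Prop :=
  (forall x, ~ x <<< x) /\
  (forall x y z, x <<< y -> y <<< z -> x <<< z) /\
  (forall x, exists l : list E, forall y, y <<< x -> In y l) /\
  (forall x, exists l : list E, forall y, ~ In y l -> x <<< y) /\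
  (forall e, action M e -> Begin M e = e /\ End M e = e) /\
  (forall X Y, X <<< Y <-> End M X <<< Begin M Y).

Definition AddP (p : chival) (a : E) := Add M a /\ chi M a = p.
Definition RemP (p : chival) (a : E) := Rem M a /\ chi M a = p.
Definition CntP (p : chival) (a : E) := Cnt M a /\ chi M a = p.
Definition OpP (p : chival) (a : E) :=
  (Add M a \/ Rem M a \/ Cnt M a) /\ chi M a = p.

Definition A0 : Prop :=
  (forall e, ~ (Add M e /\ Rem M e)) /\
  (forall e, ~ (Add M e /\ Cnt M e)) /\
  (forall e, ~ (Rem M e /\ Cnt M e)) /\
  (forall e, Add M e -> action M e) /\
  (forall e, Rem M e -> action M e) /\
  (forall e, Cnt M e -> ~ action M e) /\
  (forall X, action M (Begin M X) /\ action M (End M X)) /\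
  (forall e, Cnt M e -> Begin M e <<< End M e) /\
  (forall a b, action M a -> action M b -> a = b \/ a <<< b \/ b <<< a).

Definition A1 : Prop :=
  forall A, OpP c1 A ->
    AddP c0 (gamma M A) /\
    val M (gamma M A) = val M A /\
    gamma M A <<< End M A /\
    ~ (exists R, RemP c1 R /\ gamma M R = gamma M A /\
                 gamma M A <<< R /\ R <<< A).

Definition A2 : Prop :=
  forall A B, OpP c0 B -> AddP c0 A -> A <<< B -> val M A = val M B ->
    exists R, RemP c1 R /\ A = gamma M R /\ R <<< End M B.

Inductive Arrow : E -> E -> Prop :=
  | arr_gamma_cnt : forall C, CntP c1 C -> Arrow (gamma M C) C
  | arr_cnt_rem : forall C R, CntP c1 C -> RemP c1 R ->
      gamma M R = gamma M C -> Arrow C R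
  | arr_rem_cnt : forall R C, CntP c0 C -> RemP c1 R ->
      val M R = val M C -> ~ (C <<< R) -> gamma M R <<< C -> Arrow R C
  | arr_cnt_add : forall C A, CntP c0 C -> AddP c0 A ->
      val M C = val M A -> ~ (A <<< C) -> Arrow C A.

End LazySet.

(* Main.v *)
Require Import Defs.

Theorem lemma3p6 (M : SysExec) :
  is_system_execution M -> A0 M -> A1 M -> A2 M ->
  forall X Y : Ev M, Arrow M X Y -> ~ lt M Y X.
Proof.
  intros [Hirr [Htr [_ [_ [Hact Hiff]]]]] [_ [_ [_ [HaddA [HremA [_ [HBE _]]]]]]] H1 _ X Y HA.
  destruct HA as [C HC | C R HC HR Hg | R C _ _ _ Hn _ | C A _ _ _ Hn]; try exact Hn.
  - intro Hlt.
    assert (HopC : OpP M c1 C) by (destruct HC; split; auto).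
    destruct (H1 C HopC) as [[Hadd _] [_ [Hg _]]].
    apply Hiff in Hlt.
    destruct (Hact _ (HaddA _ Hadd)) as [Hb He].
    rewrite Hb in Hlt.
    apply Hiff in Hg. rewrite He in Hg.
    destruct (Hact _ (proj2 (HBE C))) as [Hb2 _].
    rewrite Hb2 in Hg.
    exact (Hirr _ (Htr _ _ _ Hlt Hg)).
  - intro Hlt.
    assert (HopC : OpP M c1 C) by (destruct HC; split; auto).
    assert (HopR : OpP M c1 R) by (destruct HR; split; auto).
    destruct (H1 C HopC) as [_ [_ [_ Hno]]].
    destruct (H1 R HopR) as [_ [_ [HgR _]]].
    destruct (Hact _ (HremA _ (proj1 HR))) as [_ He].
    rewrite He in HgR.
    apply Hno. exists R. rewrite <- Hg. auto.
Qed.
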